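(* Let $(\mathrm X,\mathsf d,\mathfrak m)$ be a geodesic metric measure space and let $\{x_i\}_{i\in I}$ be a countable collection of distinct points of $\mathrm X$. For $i,j\in I$ and $\delta\in\mathbb R$ let $U^\delta_{i,j}=\{x\in\mathrm X:\mathsf d(x,x_i)-\mathsf d(x,x_j)<\delta\}$. Then for any $i,j\in I$ and $\delta>-\mathsf d(x_i,x_j)$, the set $U^\delta_{i,j}$ is star-shaped at $x_i$. Moreover, there exists a countable set $S_{i,j}\subset(-\mathsf d(x_i,x_j),\infty)$ such that $$\mathfrak m(\{x\in\mathrm X:\mathsf d(x,x_i)-\mathsf d(x,x_j)=\delta\})=0\qquad\forall\,\delta\in(-\mathsf d(x_i,x_j),\infty)\setminus S_{i,j}.$$
   Context: A metric measure space is a complete separable metric space with a non-negative, non-zero Borel measure finite on bounded sets; geodesic means any two points are joined by a geodesic $\gamma:[0,1]\to\mathrm X$, $\mathsf d(\gamma_s,\gamma_t)=|s-t|\mathsf d(\gamma_0,\gamma_1)$. A Borel set $T$ is star-shaped at $x\in T$ if for every $y\in T$ there is a geodesic from $x$ to $y$ contained in $T$. *)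

(* Defs.v *)
From HB Require Import structures.
From mathcomp Require Import all_boot all_order all_algebra.
From mathcomp Require Import all_classical all_reals all_analysis.
Set Implicit Arguments. Unset Strict Implicit. Unset Printing Implicit Defensive.
Import Order.TTheory GRing.Theory Num.Theory.
Local Open Scope classical_set_scope.
Local Open Scope ring_scope.

Section MMS.
Context {R : realType} {X : Type}.
Implicit Types (dist : X -> X -> R).

Definition is_metric dist : Prop :=
  (forall x y, 0 <= dist x y) /\
  (forall x y, dist x y = 0 <-> x = y) /\
  (forall x y, dist x y = dist y x) /\
  (forall x y z, dist x z <= dist x y + dist y z).

Definition dcauchy dist (u : nat -> X) : Prop :=
  forall e : R, 0 < e -> exists N : nat,
    forall m n : nat, (N <= m)%N -> (N <= n)%N -> dist (u m) (u n) < e.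

Definition dconverges dist (u : nat -> X) (x : X) : Prop :=
  forall e : R, 0 < e -> exists N : nat, forall n : nat, (N <= n)%N -> dist (u n) x < e.

Definition dcomplete dist : Prop :=
  forall u : nat -> X, dcauchy dist u -> exists x, dconverges dist u x.

Definition dseparable dist : Prop :=
  exists D : set X, countable D /\
    forall x (e : R), 0 < e -> exists y, D y /\ dist x y < e.

Definition dopen dist (A : set X) : Prop :=
  forall x, A x -> exists r : R, 0 < r /\ forall y, dist x y < r -> A y.

Definition dbounded dist (A : set X) : Prop :=
  exists x (r : R), forall y, A y -> dist x y < r.

Definition is_geodesic dist (gamma : R -> X) (x y : X) : Prop :=
  gamma 0 = x /\ gamma 1 = y /\
  forall s t : R, 0 <= s <= 1 -> 0 <= t <= 1 ->
    dist (gamma s) (gamma t) = `|s - t| * dist x y.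

Definition geodesic_space dist : Prop :=
  forall x y, exists gamma, is_geodesic dist gamma x y.

End MMS.

Definition metric_measure_space {R : realType} {d : measure_display}
  {X : measurableType d} (dist : X -> X -> R)
  (mu : {measure set X -> \bar R}) : Prop :=
  is_metric dist /\ dcomplete dist /\ dseparable dist /\
  (@measurable d X = <<s [set A | dopen dist A] >>) /\
  mu setT <> 0%E /\
  (forall A : set X, measurable A -> dbounded dist A -> (mu A < +oo)%E).

Definition star_shaped {R : realType} {d : measure_display}
  {X : measurableType d} (dist : X -> X -> R) (T : set X) (x : X) : Prop :=
  measurable T /\ T x /\
  forall y, T y -> exists gamma : R -> X, is_geodesic dist gamma x y /\
    forall t : R, 0 <= t <= 1 -> T (gamma t).

Definition Uset {R : realType} {X : Type} (dist : X -> X -> R)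
  (xi xj : X) (delta : R) : set X :=
  [set x | dist x xi - dist x xj < delta].

(* Main.v *)
Require Import Defs.
From mathcomp Require Import all_boot all_order all_algebra.
From mathcomp Require Import all_classical all_reals all_analysis.
From mathcomp Require Import lra.
Import Order.TTheory GRing.Theory Num.Theory numFieldNormedType.Exports.
Local Open Scope classical_set_scope.
Local Open Scope ring_scope.

Lemma disj_countable d (T : measurableType d) (R : realType)
  (mu : {measure set T -> \bar R}) (F : R -> set T) (B : set T) :
  (forall r, measurable (F r)) -> measurable B -> (mu B < +oo)%E ->
  (forall r s, r <> s -> F r `&` F s = set0) ->
  countable [set r | (0 < mu (F r `&` B))%E].
Proof.
move=> mF mB Bfin Fdisj.
have mFB r : measurable (F r `&` B) by exact: measurableI.
have FBle r : (mu (F r `&` B) <= mu B)%E by apply: le_measure; rewrite ?inE //; apply: subIsetr.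
have [B0|Bn0] := eqVneq (mu B) 0%E.
  rewrite (_ : [set r | _] = set0); first exact: countable0.
  apply/seteqP; split => r //= h; have := FBle r; rewrite B0 => h2.
  by have := lt_le_trans h h2; rewrite ltxx.
have Bge0 : (0 <= mu B)%E by [].
have Bfn : mu B \is a fin_num by rewrite ge0_fin_numE.
set c := fine (mu B).
have cE : mu B = c%:E by rewrite fineK.
have c0 : 0 < c.
  rewrite lt_def; apply/andP; split; last by rewrite fine_ge0.
  by apply: contra Bn0 => /eqP c0; rewrite cE c0.
rewrite [X in countable X](_ : _ =
    \bigcup_n [set r | ((c / n.+1%:R)%:E < mu (F r `&` B))%E]); last first.
  apply/seteqP; split => r /=.
  - move=> h.
    have fn : mu (F r `&` B) \is a fin_num.
      by rewrite ge0_fin_numE // (le_lt_trans (FBle r)).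
    set y := fine (mu (F r `&` B)).
    have yE : mu (F r `&` B) = y%:E by rewrite fineK.
    move: h; rewrite yE lte_fin => y0.
    exists (Num.truncn (c / y)) => //=; rewrite yE lte_fin.
    have h := truncnS_gt (c / y).
    rewrite ltr_pdivrMr // -ltr_pdivrMl //; first by rewrite mulrC.
  - move=> [n _]; apply: le_lt_trans; rewrite lee_fin; apply: divr_ge0; [exact: ltW|by []].
apply: bigcup_countable => // n _; apply: finite_set_countable.
apply: contrapT => /infiniteP/pcard_leP/injfunPex[/= q q_fun q_inj].
have mU : measurable (\bigcup_k (F (q k) `&` B)).
  by apply: bigcup_measurable => k _; exact: mFB.
have : (mu (\bigcup_k (F (q k) `&` B)) <= mu B)%E.
  by apply: le_measure; rewrite ?inE //; move=> x [k _ []].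
rewrite measure_bigcup //; last first.
  move=> k l _ _ [x [[Fk _] [Fl _]]]; apply: contrapT => kl.
  have : (F (q k) `&` F (q l)) x by [].
  by rewrite Fdisj // => qe; apply: kl; apply: q_inj; rewrite ?inE.
apply/negP; rewrite -ltNge.
apply: (lt_le_trans _ (nneseries_lim_ge n.+2 _)) => //.
apply: (@lt_le_trans _ _ (\sum_(0 <= k < n.+2) (c / n.+1%:R)%:E)%E); last first.
  rewrite [X in (_ <= X)%E]big_mkcond /=; apply: lee_sum => k _; rewrite in_setT; apply: ltW; exact: q_fun.
rewrite sumEFin sumr_const_nat subn0 cE lte_fin.
rewrite -[_ *+ n.+2]mulr_natr -mulrA ltr_pMr // mulrC ltr_pdivlMr // mul1r ltr_nat //.
Qed.

Theorem lemma6p2 (R : realType) (d : measure_display) (X : measurableType d)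
  (dist : X -> X -> R) (mu : {measure set X -> \bar R})
  (I : Type) (xs : I -> X) :
  metric_measure_space dist mu ->
  geodesic_space dist ->
  countable [set: I] ->
  injective xs ->
  forall i j : I,
    (forall delta : R, - dist (xs i) (xs j) < delta ->
       star_shaped dist (Uset dist (xs i) (xs j) delta) (xs i)) /\
    (exists S : set R, countable S /\
       S `<=` [set t | - dist (xs i) (xs j) < t] /\
       forall delta : R, - dist (xs i) (xs j) < delta -> ~ S delta ->
         mu [set x | dist x (xs i) - dist x (xs j) = delta] = 0%E).
Proof.
move=> [[d0 [d_eq [dsym dtri]]] [_ [_ [Hsig [_ Hfin]]]]] geo _ _ i j.
set xi := xs i; set xj := xs j.
have mO : forall A, dopen dist A -> measurable A.
  by move=> A oA; rewrite Hsig; exact: sub_sigma_algebra.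
have dxx : forall x, dist x x = 0 by move=> x; apply/d_eq.
split.
  move=> delta hdelta; split; [|split].
  - apply: mO; rewrite /Uset => x /= hx; exists ((delta - (dist x xi - dist x xj)) / 2); split.
      by apply: divr_gt0 => //; lra.
    move=> y hy /=.
    have t1 := dtri y x xi; have t2 := dtri x y xj; have s := dsym x y. lra.
  - rewrite /Uset /= dxx; have := dsym xi xj; lra.
  - move=> y Ty; have [g [g0 [g1 gd]]] := geo xi y.
    exists g; split => // t ht.
    have h01 : 0 <= (0:R) <= 1 by rewrite lexx ler01.
    have h11 : 0 <= (1:R) <= 1 by rewrite lexx ler01.
    have e1 := gd t 0 ht h01; have e2 := gd 1 t h11 ht.
    move: ht => /andP[t0 t1].
    rewrite subr0 ger0_norm // g0 in e1.
    rewrite ger0_norm ?subr_ge0 // g1 mulrBl mul1r in e2.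
    have tr := dtri y (g t) xj.
    have s := dsym y xi.
    move: Ty; rewrite /Uset /= => Ty. lra.
set f := fun x => dist x xi - dist x xj.
set F := fun r => [set x | dist x xi - dist x xj = r].
set B := fun n : nat => [set x | dist xi x < n%:R].
have mF r : measurable (F r).
  rewrite -[F r]setCK; apply: measurableC; apply: mO => x /= hx.
  have [lt|gt] : f x < r \/ r < f x.
    by move/eqP: hx; rewrite neq_lt => /orP[]; [left|right].
  - exists ((r - f x) / 2); split; first by apply: divr_gt0 => //; lra.
    move=> y hy e; rewrite /f in lt hy; rewrite /F /= in e.
    have t1 := dtri y x xi; have t2 := dtri x y xj; have s := dsym x y. clear -lt hy e t1 t2 s; lra.
  - exists ((f x - r) / 2); split; first by apply: divr_gt0 => //; lra.
    move=> y hy e; rewrite /f in gt hy; rewrite /F /= in e.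
    have t1 := dtri x y xi; have t2 := dtri y x xj; have s := dsym x y. clear -gt hy e t1 t2 s; lra.
have mB n : measurable (B n).
  apply: mO; rewrite /B => x /= hx; exists (n%:R - dist xi x); split; first by rewrite subr_gt0.
  move=> y hy /=; have t := dtri xi x y; clear -hx hy t; lra.
have Bfin n : (mu (B n) < +oo)%E.
  by apply: Hfin => //; exists xi, n%:R.
have Fdisj r s : r <> s -> F r `&` F s = set0.
  move=> rs; apply/seteqP; split=> x // [h1 h2]; apply: rs; by rewrite -h1 -h2.
exists ([set t | - dist xi xj < t] `&` \bigcup_n [set r | (0 < mu (F r `&` B n))%E]).
split; [|split].
- apply: (sub_countable (subset_card_le (@subIsetr _ _ _))).
  apply: bigcup_countable => // n _; exact: disj_countable.
- exact: subIsetl.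
- move=> delta hd nS.
  have z n : mu (F delta `&` B n) = 0%E.
    apply: le_anti; rewrite measure_ge0 andbT leNgt; apply/negP => h.
    by apply: nS; split => //; exists n.
  apply: le_anti; rewrite measure_ge0 andbT.
  have := @measure_sigma_subadditive _ _ _ mu (F delta) (fun n => F delta `&` B n).
  move=> /(_ (fun n => measurableI _ _ (mF delta) (mB n)) (mF delta)) h.
  apply: le_trans (h _) _.
    move=> x Fx; exists (Num.truncn (dist xi x)).+1 => //; split => //.
    exact: truncnS_gt.
  by rewrite eseries0.
Qed.
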